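(* Let $f(\pi)=\pi f_1(0,\pi)+(1-\pi)f_0(0,\pi)$ be a $k$-equilibrium continuous-time dynamics with stable equilibria $\pi^{\mathfrak e}_1\le\dots\le\pi^{\mathfrak e}_k$ and basins $I_1,\dots,I_k$. Work in continuous time, with group $A$ initially advantaged, $\pi_0(1|B)\in I_i$, $\pi_0(1|A)\in I_j$ (so $i\le j$). Under the unconstrained policy UN, $(\pi_t(1|A),\pi_t(1|B))\to(\pi^{\mathfrak e}_j,\pi^{\mathfrak e}_i)$ and $U_t(UN)\to u(1)\big(g_A\pi^{\mathfrak e}_j+(1-g_A)\pi^{\mathfrak e}_i\big)$. Moreover: (i) If the AA1 policy is applied at all times and $L_{AA1}:=\max_{\pi\in[0,1]}|f_1(0,\pi)-f_0(0,\pi)|<1$, then both profiles converge to $\pi^{\mathfrak e}_i$ and $\lim_tU_t(AA1)=u(1)\pi^{\mathfrak e}_i\le\lim_tU_t(UN)$. (ii) If $f_1,f_0$ are $\ell_1$-Lipschitz with constants $L_1,L_0$, the AA2 policy is applied at all times, and $L_{AA2}:=\max_{0\le\Delta\le\pi\le1}\big(2[\pi L_1+(1-\pi)L_0]+|f_1(\Delta,\pi-\Delta)-f_0(\Delta,\pi-\Delta)|\big)<1$, then both profiles converge to $\pi^{\mathfrak e}_j$ and $\lim_tU_t(AA2)=u(1)\pi^{\mathfrak e}_j\ge\lim_tU_t(UN)$. Here $U_t(P)$ is the institutional utility of policy $P$ evaluated on the profiles at time $t$ of the trajectory generated by $P$ from the given initial profiles.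
   Context: Two groups $A,B$ with fractions $g_A\in[0,1]$, $g_B=1-g_A$; $\neg j$ is the other group. Group $j$ has profile $\pi_t(1|j)\in[0,1]$, $\pi_t(0|j)=1-\pi_t(1|j)$. Policy $\tau(v;j)\in[0,1]$; utilities $u(0)\le0\le u(1)$; $U_t(\tau)=\sum_jg_j\sum_vu(v)\tau(v;j)\pi_t(v|j)$. Selection rates $\beta_t(v;j)=\tau(v;j)\pi_t(v|j)$. Dynamics: continuously differentiable $f_0,f_1:[0,1]^2\to[0,1]$; continuous time $\frac{d}{dt}\pi_t(1|j)=\pi_t(1|j)(f_1(\beta_t(0;j),\beta_t(1;j))-1)+(1-\pi_t(1|j))f_0(\beta_t(0;j),\beta_t(1;j))$, policy determined by current profiles. UN: $\tau(1;j)=1,\tau(0;j)=0$, so each group follows $\dot\pi=f(\pi)-\pi$. Definition: $f$ is a $k$-equilibrium CT dynamics if it is continuously differentiable with fixed points $\pi^{\mathfrak e}_1\le\dots\le\pi^{\mathfrak e}_k$ and fixed points $\delta_i\in(\pi^{\mathfrak e}_i,\pi^{\mathfrak e}_{i+1})$, $i=1,\dots,k-1$, such that with basins $I_1=[0,\delta_1)$, $I_i=(\delta_{i-1},\delta_i)$ for $1<i<k$, $I_k=(\delta_{k-1},1]$ ($I_1=[0,1]$ if $k=1$), every solution of $\dot\pi=f(\pi)-\pi$ started in $I_i$ converges to $\pi^{\mathfrak e}_i$. Group $j$ is advantaged at $t$ if $\pi_t(1|j)\ge\pi_t(1|\neg j)$. AA1 w.r.t. advantaged $j$: $\tau(1;j)=\pi_t(1|\neg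 j)/\pi_t(1|j)$, $\tau(0;j)=0$, $\tau(1;\neg j)=1$, $\tau(0;\neg j)=0$. AA2 w.r.t. advantaged $j$: $\tau(1;j)=\tau(1;\neg j)=1$, $\tau(0;j)=0$, $\tau(0;\neg j)=(\pi_t(1|j)-\pi_t(1|\neg j))/(1-\pi_t(1|\neg j))$. ''Applied at all times'': w.r.t. the currently advantaged group. ''$\ell_1$-Lipschitz with constant $L_i$'': $|f_i(x_1,x_2)-f_i(y_1,y_2)|\le L_i(|x_1-y_1|+|x_2-y_2|)$. *)

(* Defs.v *)
From Stdlib Require Import Reals Lra Lia.
Open Scope R_scope.

Inductive group := GA | GB.
Definition other (j : group) : group := match j with GA => GB | GB => GA end.
Definition geqb (g h : group) : bool :=
  match g, h with GA, GA | GB, GB => true | _, _ => false end.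

(* a profile: p j = pi(1|j) *)
Definition profile := group -> R.
(* a policy: tau v j, with v = true for v=1, v = false for v=0 *)
Definition policy := bool -> group -> R.

Definition I01 (x : R) : Prop := 0 <= x <= 1.

Definition pi_of (p : profile) (v : bool) (j : group) : R :=
  if v then p j else 1 - p j.

Definition grp_frac (gA : R) (j : group) : R :=
  match j with GA => gA | GB => 1 - gA end.

Definition util (u0 u1 : R) (v : bool) : R := if v then u1 else u0.

Definition Util (gA u0 u1 : R) (tau : policy) (p : profile) : R :=
  grp_frac gA GA * (util u0 u1 false * tau false GA * pi_of p false GA
                    + util u0 u1 true * tau true GA * pi_of p true GA)
  + grp_frac gA GB * (util u0 u1 false * tau false GB * pi_of p false GB
                    + util u0 u1 true * tau true GB * pi_of p true GB).

Definition beta (tau : policy) (p : profile) (v : bool) (j : group) : R :=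
  tau v j * pi_of p v j.

(* continuous-time right-hand side of d/dt pi_t(1|j) *)
Definition rhs (f0 f1 : R -> R -> R) (tau : policy) (p : profile) (j : group) : R :=
  p j * (f1 (beta tau p false j) (beta tau p true j) - 1)
  + (1 - p j) * f0 (beta tau p false j) (beta tau p true j).

Definition UN (p : profile) : policy := fun v _ => if v then 1 else 0.

(* the currently advantaged group (ties: A; at ties both AA-policies
   coincide for either choice) *)
Definition adv (p : profile) : group := if Rle_dec (p GB) (p GA) then GA else GB.

Definition AA1_wrt (j : group) (p : profile) : policy :=
  fun v g => if v then (if geqb g j then p (other j) / p j else 1)
             else 0.
Definition AA2_wrt (j : group) (p : profile) : policy :=
  fun v g => if v then 1
             else (if geqb g j then 0
                   else (p j - p (other j)) / (1 - p (other j))).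

(* applied at all times: w.r.t. the currently advantaged group *)
Definition AA1 (p : profile) : policy := AA1_wrt (adv p) p.
Definition AA2 (p : profile) : policy := AA2_wrt (adv p) p.

Definition derivable_within (g : R -> R) (D : R -> Prop) (x l : R) : Prop :=
  forall eps, 0 < eps -> exists delta, 0 < delta /\
    forall h, h <> 0 -> Rabs h < delta -> D (x + h) ->
      Rabs ((g (x + h) - g x) / h - l) < eps.

Definition continuous_within (g : R -> R) (D : R -> Prop) : Prop :=
  forall x, D x -> forall eps, 0 < eps -> exists delta, 0 < delta /\
    forall y, D y -> Rabs (y - x) < delta -> Rabs (g y - g x) < eps.

Definition continuous_on_square (g : R -> R -> R) : Prop :=
  forall x1 x2, I01 x1 -> I01 x2 -> forall eps, 0 < eps -> exists delta, 0 < delta /\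
    forall y1 y2, I01 y1 -> I01 y2 -> Rabs (y1 - x1) < delta -> Rabs (y2 - x2) < delta ->
      Rabs (g y1 y2 - g x1 x2) < eps.

Definition C1_on_I01 (f : R -> R) : Prop :=
  exists df : R -> R,
    (forall x, I01 x -> derivable_within f I01 x (df x)) /\ continuous_within df I01.

Definition C1_square_to_I01 (g : R -> R -> R) : Prop :=
  (forall x1 x2, I01 x1 -> I01 x2 -> I01 (g x1 x2)) /\
  exists d1 d2 : R -> R -> R,
    (forall x1 x2, I01 x1 -> I01 x2 ->
        derivable_within (fun s => g s x2) I01 x1 (d1 x1 x2) /\
        derivable_within (fun s => g x1 s) I01 x2 (d2 x1 x2)) /\
    continuous_on_square d1 /\ continuous_on_square d2.

Definition l1_Lipschitz (g : R -> R -> R) (L : R) : Prop :=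
  forall x1 x2 y1 y2, I01 x1 -> I01 x2 -> I01 y1 -> I01 y2 ->
    Rabs (g x1 x2 - g y1 y2) <= L * (Rabs (x1 - y1) + Rabs (x2 - y2)).

Definition right_cont0 (h : R -> R) : Prop :=
  forall eps, 0 < eps -> exists delta, 0 < delta /\
    forall t, 0 <= t < delta -> Rabs (h t - h 0) < eps.

Definition traj1 (f : R -> R) (p : R -> R) : Prop :=
  (forall t, 0 <= t -> I01 (p t)) /\ right_cont0 p /\
  (forall t, 0 < t -> derivable_pt_lim p t (f (p t) - p t)).

Definition traj2 (f0 f1 : R -> R -> R) (Pol : profile -> policy)
  (x : R -> profile) : Prop :=
  forall j : group,
    (forall t, 0 <= t -> I01 (x t j)) /\ right_cont0 (fun t => x t j) /\
    (forall t, 0 < t -> derivable_pt_lim (fun s => x s j) t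
                          (rhs f0 f1 (Pol (x t)) (x t) j)).

Definition cv_t (h : R -> R) (l : R) : Prop :=
  forall eps, 0 < eps -> exists T, forall t, T <= t -> Rabs (h t - l) < eps.

(* basins (1-based indices): I_1 = [0,d_1), I_i = (d_{i-1},d_i), I_k = (d_{k-1},1] *)
Definition in_basin (k : nat) (d : nat -> R) (i : nat) (x : R) : Prop :=
  I01 x /\ ((1 < i)%nat -> d (i - 1)%nat < x) /\ ((i < k)%nat -> x < d i).

(* f is a k-equilibrium CT dynamics with equilibria pe 1..k and
   separating fixed points d 1..k-1 *)
Definition k_equilibrium (f : R -> R) (k : nat) (pe d : nat -> R) : Prop :=
  (1 <= k)%nat /\ C1_on_I01 f /\
  (forall i, (1 <= i <= k)%nat -> I01 (pe i) /\ f (pe i) = pe i) /\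
  (forall i, (1 <= i < k)%nat -> pe i <= pe (S i)) /\
  (forall i, (1 <= i < k)%nat -> pe i < d i < pe (S i) /\ f (d i) = d i) /\
  (forall i, (1 <= i <= k)%nat -> forall p, traj1 f p ->
     in_basin k d i (p 0) -> cv_t p (pe i)).

(* "max_{x in S} F x < 1": the maximum exists and is < 1 *)
Definition max_lt1 (S : R -> R -> Prop) (F : R -> R -> R) : Prop :=
  exists L, L < 1 /\ (exists a b, S a b /\ F a b = L) /\
    (forall a b, S a b -> F a b <= L).

(* Main.v *)
Require Import Defs.
From Stdlib Require Import Reals Lra Lia Psatz.
Open Scope R_scope.

Lemma mono_deriv (h h' : R -> R) :
  (forall t, 0 < t -> derivable_pt_lim h t (h' t)) ->
  (forall t, 0 < t -> 0 <= h' t) ->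
  forall s t, 0 < s -> s < t -> h s <= h t.
Proof.
  intros Hd Hp s t Hs Hst.
  destruct (MVT_cor2 h h' s t Hst) as [c [Hc1 Hc2]].
  { intros c Hc; apply Hd; lra. }
  assert (0 <= h' c) by (apply Hp; lra). nra.
Qed.

Lemma deriv_sqexp (D D' : R -> R) (c t : R) :
  derivable_pt_lim D t (D' t) ->
  derivable_pt_lim (fun s => D s * D s * exp (c * s)) t
    (2 * exp (c * t) * (D t * D' t + c / 2 * (D t * D t))).
Proof.
  intros HD.
  assert (He : derivable_pt_lim (fun s => exp (c * s)) t (exp (c * t) * c)).
  { apply (derivable_pt_lim_comp (fun s => c * s) exp t c (exp (c*t))).
    - assert (Hl := derivable_pt_lim_scal id c t 1 (derivable_pt_lim_id t)).
      rewrite Rmult_1_r in Hl. exact Hl.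
    - apply derivable_pt_lim_exp. }
  assert (H2 := derivable_pt_lim_mult _ _ t _ _ HD HD).
  assert (H3 := derivable_pt_lim_mult _ _ t _ _ H2 He).
  replace (2 * exp (c * t) * (D t * D' t + c / 2 * (D t * D t)))
    with ((D' t * D t + D t * D' t) * exp (c * t) + (D t * D t) * (exp (c * t) * c))
    by field.
  exact H3.
Qed.

Definition GapH (D D' : R -> R) (a : R) : Prop :=
  0 < a /\ (forall t, 0 <= t -> -1 <= D t <= 1) /\ right_cont0 D /\
  (forall t, 0 < t -> derivable_pt_lim D t (D' t)) /\
  (forall t, 0 < t -> -2 * (D t * D t) <= D t * D' t <= - a * (D t * D t)).

Lemma gap_up (D D' : R -> R) (a : R) (HG : GapH D D' a) : forall s t, 0 < s -> s < t ->
  D s * D s * exp (4 * s) <= D t * D t * exp (4 * t).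
Proof.
  assert (HG0 := HG); destruct HG0 as [Ha [Hb [Hrc [Hd Hbd]]]].
  apply (mono_deriv (fun s => D s * D s * exp (4 * s))
     (fun t => 2 * exp (4 * t) * (D t * D' t + 4 / 2 * (D t * D t)))).
  - intros t Ht; apply deriv_sqexp; auto.
  - intros t Ht. specialize (Hbd t Ht). assert (0 < exp (4*t)) by apply exp_pos.
    apply Rmult_le_pos; lra.
Qed.

Lemma gap_down (D D' : R -> R) (a : R) (HG : GapH D D' a) : forall s t, 0 < s -> s < t ->
  D t * D t * exp (2 * a * t) <= D s * D s * exp (2 * a * s).
Proof.
  assert (HG0 := HG); destruct HG0 as [Ha [Hb [Hrc [Hd Hbd]]]].
  intros s t Hs Hst.
  enough (- (D s * D s * exp (2 * a * s)) <= - (D t * D t * exp (2 * a * t))) by lra.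
  apply (mono_deriv (fun s => - (D s * D s * exp (2 * a * s)))
     (fun t => - (2 * exp (2 * a * t) * (D t * D' t + 2 * a / 2 * (D t * D t))))); auto.
  - intros t0 Ht; apply derivable_pt_lim_opp; apply deriv_sqexp; auto.
  - intros t0 Ht. specialize (Hbd t0 Ht). assert (0 < exp (2 * a*t0)) by apply exp_pos.
    assert (0 <= 2 * exp (2 * a * t0) * (- (D t0 * D' t0 + 2 * a / 2 * (D t0 * D t0)))).
    { apply Rmult_le_pos; try lra. }
    lra.
Qed.

Lemma gap_sq_dec (D D' : R -> R) (a : R) (HG : GapH D D' a) : forall s t, 0 < s -> s < t -> D t * D t <= D s * D s.
Proof.
  assert (HG0 := HG); destruct HG0 as [Ha [Hb [Hrc [Hd Hbd]]]].
  intros s t Hs Hst. assert (H := gap_down D D' a HG s t Hs Hst).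
  assert (exp (2 * a * s) < exp (2 * a * t)) by (apply exp_increasing; nra).
  assert (0 < exp (2 * a * s)) by apply exp_pos.
  nra.
Qed.

Lemma gap_sq_inc (D D' : R -> R) (a : R) (HG : GapH D D' a) : forall s t, 0 < s -> s < t -> D s * D s <= D t * D t * exp (4 * t).
Proof.
  assert (HG0 := HG); destruct HG0 as [Ha [Hb [Hrc [Hd Hbd]]]].
  intros s t Hs Hst. assert (H := gap_up D D' a HG s t Hs Hst).
  assert (1 < exp (4 * s)) by (rewrite <- exp_0; apply exp_increasing; lra).
  nra.
Qed.

Lemma gap_nonneg (D D' : R -> R) (a : R) (HG : GapH D D' a) : 0 <= D 0 -> forall t, 0 <= t -> 0 <= D t.
Proof.
  assert (HG0 := HG); destruct HG0 as [Ha [Hb [Hrc [Hd Hbd]]]].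
  intros H0 t Ht.
  destruct (Req_dec t 0) as [->|Htn]; [lra|].
  assert (Htp : 0 < t) by lra.
  destruct (Req_dec (D 0) 0) as [Hz|Hnz].
  -
    destruct (Req_dec (D t) 0) as [E|E]; [lra|].
    exfalso.
    destruct (Hrc (Rabs (D t))) as [del [Hdel Hs]]. { apply Rabs_pos_lt; auto. }
    set (s := Rmin (del/2) (t/2)).
    assert (0 < s) by (unfold s; apply Rmin_glb_lt; lra).
    assert (s < t) by (unfold s; assert (Rmin (del/2) (t/2) <= t/2) by apply Rmin_r; lra).
    assert (s < del) by (unfold s; assert (Rmin (del/2) (t/2) <= del/2) by apply Rmin_l; lra).
    specialize (Hs s ltac:(lra)). rewrite Hz, Rminus_0_r in Hs.
    assert (HH := gap_sq_dec D D' a HG s t ltac:(lra) ltac:(lra)).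
    assert (HQ : Rabs (D s) * Rabs (D s) < Rabs (D t) * Rabs (D t)).
    { assert (0 <= Rabs (D s)) by apply Rabs_pos. nra. }
    rewrite <- !Rabs_mult in HQ.
    rewrite !Rabs_right in HQ; try (apply Rle_ge; nra). lra.
  - assert (Hp : 0 < D 0) by lra.
    destruct (Hrc (D 0)) as [del [Hdel Hs]]; auto.
    assert (Hpos : forall u, 0 < u -> D u <> 0).
    { intros u Hu E.
      set (s := Rmin (del/2) (u/2)).
      assert (0 < s) by (unfold s; apply Rmin_glb_lt; lra).
      assert (s < u) by (unfold s; assert (Rmin (del/2) (u/2) <= u/2) by apply Rmin_r; lra).
      assert (s < del) by (unfold s; assert (Rmin (del/2) (u/2) <= del/2) by apply Rmin_l; lra).
      specialize (Hs s ltac:(lra)). apply Rabs_def2 in Hs.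
      assert (HH := gap_sq_inc D D' a HG s u ltac:(lra) ltac:(lra)). rewrite E in HH. nra. }
    destruct (Rle_dec 0 (D t)) as [|Hneg]; auto. exfalso.
    set (s := Rmin (del/2) (t/2)).
    assert (0 < s) by (unfold s; apply Rmin_glb_lt; lra).
    assert (s < t) by (unfold s; assert (Rmin (del/2) (t/2) <= t/2) by apply Rmin_r; lra).
    assert (s < del) by (unfold s; assert (Rmin (del/2) (t/2) <= del/2) by apply Rmin_l; lra).
    specialize (Hs s ltac:(lra)). apply Rabs_def2 in Hs.
    destruct (Ranalysis5.IVT_interv (fun u => - D u) s t) as [z [Hz1 Hz2]].
    + intros u Hu. apply continuity_pt_opp.
      apply derivable_continuous_pt. exists (D' u). apply Hd. lra.
    + lra.
    + lra.
    + lra.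
    + apply (Hpos z); lra.
Qed.

Lemma gap_cv (D D' : R -> R) (a : R) (HG : GapH D D' a) : cv_t D 0.
Proof.
  assert (HG0 := HG); destruct HG0 as [Ha [Hb [Hrc [Hd Hbd]]]].
  intros eps Heps.
  exists (2 + / (2 * a * (eps * eps))).
  intros t Ht.
  assert (He2 : 0 < eps * eps) by nra.
  assert (Hk : 0 < 2 * a * (eps * eps)) by (apply Rmult_lt_0_compat; lra).
  assert (Hi : 0 < / (2 * a * (eps * eps))) by (apply Rinv_0_lt_compat; lra).
  assert (H1 := gap_down D D' a HG 1 t ltac:(lra) ltac:(lra)).
  assert (HD1 := Hb 1 ltac:(lra)).
  assert (E : exp (2 * a * t) = exp (2 * a * (t - 1)) * exp (2 * a * 1)).
  { rewrite <- exp_plus. f_equal. ring. }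
  rewrite E in H1.
  assert (0 < exp (2 * a * 1)) by apply exp_pos.
  assert (H2 : D t * D t * exp (2 * a * (t - 1)) <= 1).
  { assert (D 1 * D 1 <= 1) by nra.
    assert (D t * D t * exp (2 * a * (t - 1)) * exp (2 * a * 1) <= 1 * exp (2 * a * 1)) by nra.
    nra. }
  assert (H3 : 1 + 2 * a * (t - 1) < exp (2 * a * (t - 1))) by (apply exp_ineq1; nra).
  assert (H4 : 2 * a * (t - 1) * (eps * eps) > 1).
  { assert (t - 1 > / (2 * a * (eps * eps))) by lra.
    assert (HX : 2 * a * (eps * eps) * (t - 1) > 2 * a * (eps * eps) * / (2 * a * (eps * eps))).
    { apply Rmult_gt_compat_l; [nra| lra]. }
    rewrite Rinv_r in HX; nra. }
  assert (H5 : D t * D t < eps * eps).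
  { set (E1 := exp (2 * a * (t - 1))) in *.
    assert (0 <= D t * D t) by nra.
    assert (HE : E1 * (eps * eps) > 1) by nra.
    assert (HE2 : D t * D t * E1 < eps * eps * E1) by (rewrite (Rmult_comm (eps*eps)); lra).
    apply (Rmult_lt_reg_r E1); [unfold E1; apply exp_pos | lra]. }
  rewrite Rminus_0_r.
  destruct (Rle_dec 0 (D t)); [rewrite Rabs_right by lra | rewrite Rabs_left by lra]; nra.
Qed.


Lemma divmul (x y : R) : 0 <= y <= x -> y / x * x = y.
Proof.
  intros H. destruct (Req_dec x 0) as [->|Hx].
  - assert (y = 0) by lra. subst. unfold Rdiv. ring.
  - field. auto.
Qed.

Lemma rc_minus (g h : R -> R) : right_cont0 g -> right_cont0 h ->
  right_cont0 (fun t => g t - h t).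
Proof.
  intros Hg Hh eps He.
  destruct (Hg (eps/2)) as [d1 [Hd1 H1]]; [lra|].
  destruct (Hh (eps/2)) as [d2 [Hd2 H2]]; [lra|].
  exists (Rmin d1 d2). split; [apply Rmin_glb_lt; auto|].
  intros t Ht.
  assert (t < d1) by (assert (Rmin d1 d2 <= d1) by apply Rmin_l; lra).
  assert (t < d2) by (assert (Rmin d1 d2 <= d2) by apply Rmin_r; lra).
  specialize (H1 t ltac:(lra)). specialize (H2 t ltac:(lra)).
  apply Rabs_def2 in H1. apply Rabs_def2 in H2. apply Rabs_def1; lra.
Qed.

Lemma cv_t_lin (h p1 p2 : R -> R) (c1 c2 l1 l2 : R) :
  cv_t p1 l1 -> cv_t p2 l2 ->
  (forall t, 0 <= t -> h t = c1 * p1 t + c2 * p2 t) ->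
  cv_t h (c1 * l1 + c2 * l2).
Proof.
  intros H1 H2 Hh eps He.
  set (K := Rabs c1 + Rabs c2 + 1).
  assert (HK : 1 <= K) by (unfold K; assert (0 <= Rabs c1) by apply Rabs_pos;
     assert (0 <= Rabs c2) by apply Rabs_pos; lra).
  destruct (H1 (eps / K)) as [T1 HT1]. { apply Rdiv_lt_0_compat; lra. }
  destruct (H2 (eps / K)) as [T2 HT2]. { apply Rdiv_lt_0_compat; lra. }
  exists (Rmax 0 (Rmax T1 T2)). intros t Ht.
  assert (0 <= t) by (assert (0 <= Rmax 0 (Rmax T1 T2)) by apply Rmax_l; lra).
  assert (Rmax T1 T2 <= t) by (assert (Rmax T1 T2 <= Rmax 0 (Rmax T1 T2)) by apply Rmax_r; lra).
  assert (A1 := HT1 t ltac:(assert (T1 <= Rmax T1 T2) by apply Rmax_l; lra)).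
  assert (A2 := HT2 t ltac:(assert (T2 <= Rmax T1 T2) by apply Rmax_r; lra)).
  rewrite Hh by auto.
  replace (c1 * p1 t + c2 * p2 t - (c1 * l1 + c2 * l2))
    with (c1 * (p1 t - l1) + c2 * (p2 t - l2)) by ring.
  eapply Rle_lt_trans; [apply Rabs_triang|]. rewrite !Rabs_mult.
  assert (0 <= Rabs c1) by apply Rabs_pos. assert (0 <= Rabs c2) by apply Rabs_pos.
  assert (Rabs c1 * Rabs (p1 t - l1) <= Rabs c1 * (eps / K)) by (apply Rmult_le_compat_l; lra).
  assert (Rabs c2 * Rabs (p2 t - l2) <= Rabs c2 * (eps / K)) by (apply Rmult_le_compat_l; lra).
  assert (Rabs c1 * (eps / K) + Rabs c2 * (eps / K) < eps).
  { replace (Rabs c1 * (eps / K) + Rabs c2 * (eps / K)) with ((K - 1) * (eps / K))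
      by (unfold K; ring).
    assert (eps / K * K = eps) by (field; lra).
    assert (0 < eps / K) by (apply Rdiv_lt_0_compat; lra). nra. }
  lra.
Qed.

Lemma pe_mono (F : R -> R) k pe d :
  k_equilibrium F k pe d -> forall m n, (1 <= m)%nat -> (m <= n)%nat -> (n <= k)%nat ->
  pe m <= pe n.
Proof.
  intros [_ [_ [_ [Hm _]]]] m n H1 H2 H3.
  induction n as [|n IH]; [lia|].
  destruct (Nat.eq_dec m (S n)) as [->|Hne]; [lra|].
  assert (pe m <= pe n) by (apply IH; lia).
  assert (pe n <= pe (S n)) by (apply Hm; lia). lra.
Qed.

Lemma i_le_j (F : R -> R) k pe d i j a0 b0 :
  k_equilibrium F k pe d -> (1 <= i <= k)%nat -> (1 <= j <= k)%nat ->
  b0 <= a0 -> in_basin k d i b0 -> in_basin k d j a0 -> (i <= j)%nat.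
Proof.
  intros HK Hi Hj Hab [_ [Hb1 _]] [_ [_ Ha2]].
  destruct (Nat.le_gt_cases i j) as [|Hlt]; auto. exfalso.
  assert (E1 : d (i - 1)%nat < b0) by (apply Hb1; lia).
  assert (E2 : a0 < d j) by (apply Ha2; lia).
  assert (d j <= d (i - 1)%nat).
  { destruct (Nat.eq_dec j (i - 1)) as [->|Hne]; [lra|].
    assert (HK2 := HK); destruct HK2 as [_ [_ [_ [_ [Hd _]]]]].
    assert (Y1 := Hd j). assert (Y2 := Hd (i-1)%nat).
    specialize (Y1 ltac:(lia)). specialize (Y2 ltac:(lia)).
    assert (pe (S j) <= pe (i - 1)%nat) by (eapply pe_mono; eauto; lia).
    lra. }
  lra.
Qed.

Lemma UN_rhs f0 f1 (P : profile) g :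
  rhs f0 f1 (UN P) P g = (fun p => p * f1 0 p + (1 - p) * f0 0 p) (P g) - P g.
Proof.
  unfold rhs, beta, UN, pi_of. simpl. rewrite Rmult_0_l, Rmult_1_l. ring.
Qed.

Lemma UN_util gA u0 u1 (P : profile) :
  Util gA u0 u1 (UN P) P = u1 * gA * P GA + u1 * (1 - gA) * P GB.
Proof. unfold Util, UN, pi_of, util, grp_frac. simpl. ring. Qed.

Lemma AA1_cases f0 f1 (P : profile) : I01 (P GA) -> I01 (P GB) ->
  exists m, I01 m /\
  (P GA - P GB) * (rhs f0 f1 (AA1 P) P GA - rhs f0 f1 (AA1 P) P GB)
  = (P GA - P GB) * (P GA - P GB) * (f1 0 m - f0 0 m - 1).
Proof.
  intros HA HB. unfold AA1, adv. destruct (Rle_dec (P GB) (P GA)) as [Hle|Hlt].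
  - exists (P GB). split; auto. unfold AA1_wrt, rhs, beta, pi_of. simpl.
    rewrite divmul by (unfold I01 in *; lra). rewrite !Rmult_0_l, !Rmult_1_l. ring.
  - exists (P GA). split; auto. unfold AA1_wrt, rhs, beta, pi_of. simpl.
    rewrite divmul by (unfold I01 in *; lra). rewrite !Rmult_0_l, !Rmult_1_l. ring.
Qed.

Lemma AA1_rhsB f0 f1 (P : profile) : I01 (P GA) -> I01 (P GB) -> P GB <= P GA ->
  rhs f0 f1 (AA1 P) P GB = (fun p => p * f1 0 p + (1 - p) * f0 0 p) (P GB) - P GB.
Proof.
  intros HA HB Hle. unfold AA1, adv. destruct (Rle_dec (P GB) (P GA)) as [_|]; [|lra].
  unfold AA1_wrt, rhs, beta, pi_of. simpl. rewrite Rmult_0_l, Rmult_1_l. ring.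
Qed.

Lemma AA1_util gA u0 u1 (P : profile) : I01 (P GA) -> I01 (P GB) -> P GB <= P GA ->
  Util gA u0 u1 (AA1 P) P = u1 * P GB.
Proof.
  intros HA HB Hle. unfold AA1, adv. destruct (Rle_dec (P GB) (P GA)) as [_|]; [|lra].
  unfold AA1_wrt, Util, pi_of, util, grp_frac. simpl.
  rewrite (Rmult_assoc u1 (P GB / P GA)), divmul by (unfold I01 in *; lra). ring.
Qed.

Lemma AA2_rhsA f0 f1 (P : profile) : I01 (P GA) -> I01 (P GB) -> P GB <= P GA ->
  rhs f0 f1 (AA2 P) P GA = (fun p => p * f1 0 p + (1 - p) * f0 0 p) (P GA) - P GA.
Proof.
  intros HA HB Hle. unfold AA2, adv. destruct (Rle_dec (P GB) (P GA)) as [_|]; [|lra].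
  unfold AA2_wrt, rhs, beta, pi_of. simpl. rewrite Rmult_0_l, Rmult_1_l. ring.
Qed.

Lemma AA2_util gA u0 u1 (P : profile) : I01 (P GA) -> I01 (P GB) -> P GB <= P GA ->
  Util gA u0 u1 (AA2 P) P = (u1 * gA + (1 - gA) * u0) * P GA + ((1 - gA) * u1 - (1 - gA) * u0) * P GB.
Proof.
  intros HA HB Hle. unfold AA2, adv. destruct (Rle_dec (P GB) (P GA)) as [_|]; [|lra].
  unfold AA2_wrt, Util, pi_of, util, grp_frac. simpl.
  rewrite (Rmult_assoc u0 ((P GA - P GB) / (1 - P GB))), divmul by (unfold I01 in *; lra). ring.
Qed.

Lemma Rabs_bt (x y : R) : Rabs x <= y -> - y <= x <= y.
Proof. unfold Rabs; destruct (Rcase_abs x); intros; lra. Qed.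

Lemma AA2_core f0 f1 L1 L0 L p q :
  l1_Lipschitz f1 L1 -> l1_Lipschitz f0 L0 ->
  (forall D p, 0 <= D /\ D <= p /\ p <= 1 ->
     2 * (p * L1 + (1 - p) * L0) + Rabs (f1 D (p - D) - f0 D (p - D)) <= L) ->
  L < 1 -> I01 p -> I01 q -> q <= p ->
  -2 * ((p - q) * (p - q)) <=
  (p - q) * ((p * (f1 0 p - 1) + (1 - p) * f0 0 p)
             - (q * (f1 (p - q) q - 1) + (1 - q) * f0 (p - q) q))
  <= - (1 - L) * ((p - q) * (p - q)).
Proof.
  intros Hl1 Hl0 HM HL Hp Hq Hqp. unfold I01 in *.
  set (D := p - q).
  assert (HD : 0 <= D) by (unfold D; lra).
  assert (I01 D) by (unfold I01, D; lra).
  assert (HM' := HM D p ltac:(unfold D; lra)).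
  replace (p - D) with q in HM' by (unfold D; ring).
  assert (A1 := Hl1 0 p D q ltac:(unfold I01; lra) ltac:(unfold I01; lra) ltac:(auto) ltac:(unfold I01; lra)).
  assert (A0 := Hl0 0 p D q ltac:(unfold I01; lra) ltac:(unfold I01; lra) ltac:(auto) ltac:(unfold I01; lra)).
  replace (Rabs (0 - D) + Rabs (p - q)) with (2 * D) in A1, A0
    by (rewrite Rabs_left1 by lra; rewrite Rabs_right by lra; unfold D; ring).
  set (a1 := f1 0 p - f1 D q) in *.
  set (a0 := f0 0 p - f0 D q) in *.
  set (b := f1 D q - f0 D q) in *.
  replace ((p * (f1 0 p - 1) + (1 - p) * f0 0 p) - (q * (f1 D q - 1) + (1 - q) * f0 D q))
    with (p * a1 + (1 - p) * a0 + D * b - D) by (unfold a1, a0, b, D; ring).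

  assert (Hb : - Rabs b <= b <= Rabs b) by (apply Rabs_bt; lra).
  assert (E : Rabs (p * a1 + (1 - p) * a0 + D * b) <= D * L).
  { eapply Rle_trans; [apply Rabs_triang|].
    eapply Rle_trans; [apply Rplus_le_compat_r; apply Rabs_triang|].
    rewrite !Rabs_mult, (Rabs_right p), (Rabs_right (1 - p)), (Rabs_right D) by lra.
    assert (p * Rabs a1 <= p * (L1 * (2 * D))) by (apply Rmult_le_compat_l; lra).
    assert ((1 - p) * Rabs a0 <= (1 - p) * (L0 * (2 * D))) by (apply Rmult_le_compat_l; lra).
    nra. }
  apply Rabs_bt in E.
  split; nra.
Qed.

Lemma AA2_cases f0 f1 L1 L0 L (P : profile) :
  l1_Lipschitz f1 L1 -> l1_Lipschitz f0 L0 ->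
  (forall D p, 0 <= D /\ D <= p /\ p <= 1 ->
     2 * (p * L1 + (1 - p) * L0) + Rabs (f1 D (p - D) - f0 D (p - D)) <= L) ->
  L < 1 -> I01 (P GA) -> I01 (P GB) ->
  -2 * ((P GA - P GB) * (P GA - P GB)) <=
  (P GA - P GB) * (rhs f0 f1 (AA2 P) P GA - rhs f0 f1 (AA2 P) P GB)
  <= - (1 - L) * ((P GA - P GB) * (P GA - P GB)).
Proof.
  intros Hl1 Hl0 HM HL HA HB. unfold AA2, adv. destruct (Rle_dec (P GB) (P GA)) as [Hle|Hlt].
  - unfold AA2_wrt, rhs, beta, pi_of. simpl.
    rewrite divmul by (unfold I01 in *; lra). rewrite !Rmult_0_l, !Rmult_1_l.
    apply (AA2_core f0 f1 L1 L0 L); auto.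
  - unfold AA2_wrt, rhs, beta, pi_of. simpl.
    rewrite divmul by (unfold I01 in *; lra). rewrite !Rmult_0_l, !Rmult_1_l.
    assert (H := AA2_core f0 f1 L1 L0 L (P GB) (P GA) Hl1 Hl0 HM HL HB HA ltac:(lra)).
    match goal with |- _ <= ?X <= _ => match type of H with _ <= ?Y <= _ =>
      replace X with Y by ring end end.
    replace ((P GA - P GB) * (P GA - P GB)) with ((P GB - P GA) * (P GB - P GA)) by ring.
    exact H.
Qed.

Theorem mainTheorem12
  (f0 f1 : R -> R -> R) (gA u0 u1 : R) (k : nat) (pe d : nat -> R)
  (i j : nat) (a0 b0 : R) :
  C1_square_to_I01 f0 -> C1_square_to_I01 f1 ->
  0 <= gA <= 1 -> u0 <= 0 -> 0 <= u1 ->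
  k_equilibrium (fun p => p * f1 0 p + (1 - p) * f0 0 p) k pe d ->
  (1 <= i <= k)%nat -> (1 <= j <= k)%nat ->
  b0 <= a0 -> in_basin k d i b0 -> in_basin k d j a0 ->
  (* UN *)
  (forall x, traj2 f0 f1 UN x -> x 0 GA = a0 -> x 0 GB = b0 ->
     cv_t (fun t => x t GA) (pe j) /\ cv_t (fun t => x t GB) (pe i) /\
     cv_t (fun t => Util gA u0 u1 (UN (x t)) (x t))
          (u1 * (gA * pe j + (1 - gA) * pe i)))
  /\
  (* (i) AA1 *)
  (max_lt1 (fun p _ => I01 p) (fun p _ => Rabs (f1 0 p - f0 0 p)) ->
   forall x, traj2 f0 f1 AA1 x -> x 0 GA = a0 -> x 0 GB = b0 ->
     cv_t (fun t => x t GA) (pe i) /\ cv_t (fun t => x t GB) (pe i) /\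
     cv_t (fun t => Util gA u0 u1 (AA1 (x t)) (x t)) (u1 * pe i) /\
     u1 * pe i <= u1 * (gA * pe j + (1 - gA) * pe i))
  /\
  (* (ii) AA2 *)
  (forall L1 L0, l1_Lipschitz f1 L1 -> l1_Lipschitz f0 L0 ->
   max_lt1 (fun D p => 0 <= D /\ D <= p /\ p <= 1)
           (fun D p => 2 * (p * L1 + (1 - p) * L0)
                       + Rabs (f1 D (p - D) - f0 D (p - D))) ->
   forall x, traj2 f0 f1 AA2 x -> x 0 GA = a0 -> x 0 GB = b0 ->
     cv_t (fun t => x t GA) (pe j) /\ cv_t (fun t => x t GB) (pe j) /\
     cv_t (fun t => Util gA u0 u1 (AA2 (x t)) (x t)) (u1 * pe j) /\
     u1 * pe j >= u1 * (gA * pe j + (1 - gA) * pe i)).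
Proof.
  intros HC0 HC1 HgA Hu0 Hu1 HK Hi Hj Hab HbI HaI.
  assert (Hij := i_le_j _ _ _ _ _ _ _ _ HK Hi Hj Hab HbI HaI).
  assert (Hpe : pe i <= pe j) by (eapply pe_mono; eauto; lia).
  assert (HKb := HK); destruct HKb as [_ [_ [_ [_ [_ Hbas]]]]].
  split; [|split].
  - intros x Hx HA0 HB0.
    destruct (Hx GA) as [IA [RA DA]]; destruct (Hx GB) as [IB [RB DB]].
    assert (cA : cv_t (fun t => x t GA) (pe j)).
    { apply (Hbas j Hj).
      - split; [exact IA| split; [exact RA|]]. intros t Ht. rewrite <- UN_rhs. apply DA; auto.
      - rewrite HA0; auto. }
    assert (cB : cv_t (fun t => x t GB) (pe i)).
    { apply (Hbas i Hi).
      - split; [exact IB| split; [exact RB|]]. intros t Ht. rewrite <- UN_rhs. apply DB; auto.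
      - rewrite HB0; auto. }
    split; [exact cA| split; [exact cB|]].
    replace (u1 * (gA * pe j + (1 - gA) * pe i)) with (u1 * gA * pe j + u1 * (1 - gA) * pe i) by ring.
    apply (cv_t_lin _ _ _ _ _ _ _ cA cB). intros t _. apply UN_util.
  - intros [L [HL [_ HLb]]] x Hx HA0 HB0.
    assert (HLp : forall p, I01 p -> Rabs (f1 0 p - f0 0 p) <= L) by (intros p Hp; apply (HLb p 0); auto).
    destruct (Hx GA) as [IA [RA DA]]; destruct (Hx GB) as [IB [RB DB]].
    set (D := fun t => x t GA - x t GB).
    set (D' := fun t => rhs f0 f1 (AA1 (x t)) (x t) GA - rhs f0 f1 (AA1 (x t)) (x t) GB).
    assert (HG : GapH D D' (1 - L)).
    { split; [lra|]. split; [|split; [|split]].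
      - intros t Ht. specialize (IA t Ht). specialize (IB t Ht). unfold D, I01 in *. lra.
      - apply rc_minus; auto.
      - intros t Ht. apply (derivable_pt_lim_minus (fun s => x s GA) (fun s => x s GB)); auto.
      - intros t Ht. unfold D, D'.
        destruct (AA1_cases f0 f1 (x t) (IA t ltac:(lra)) (IB t ltac:(lra))) as [m [Hm E]].
        rewrite E. specialize (HLp m Hm). apply Rabs_bt in HLp.
        assert (0 <= (x t GA - x t GB) * (x t GA - x t GB)) by (apply (Rle_0_sqr (x t GA - x t GB))).
        generalize dependent ((x t GA - x t GB) * (x t GA - x t GB)).
        generalize dependent (f1 0 m - f0 0 m). intros c Hc S HS.
        split; nra. }
    assert (Hnn : forall t, 0 <= t -> x t GB <= x t GA).
    { intros t Ht. assert (H := gap_nonneg D D' (1 - L) HG ltac:(unfold D; lra) t Ht).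
      unfold D in H; lra. }
    assert (cB : cv_t (fun t => x t GB) (pe i)).
    { apply (Hbas i Hi).
      - split; [exact IB| split; [exact RB|]]. intros t Ht. rewrite <- AA1_rhsB.
        + apply DB; auto.
        + apply IA; lra.
        + apply IB; lra.
        + apply Hnn; lra.
      - rewrite HB0; auto. }
    assert (cD := gap_cv D D' (1 - L) HG).
    assert (cA : cv_t (fun t => x t GA) (pe i)).
    { replace (pe i) with (1 * 0 + 1 * pe i) by ring.
      apply (cv_t_lin _ _ _ _ _ _ _ cD cB). intros t _. unfold D. ring. }
    split; [exact cA| split; [exact cB| split]].
    + replace (u1 * pe i) with (u1 * pe i + 0 * pe i) by ring.
      apply (cv_t_lin _ _ _ _ _ _ _ cB cB). intros t Ht.
      rewrite AA1_util; auto; try ring.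
    + assert (0 <= gA * (pe j - pe i)) by (apply Rmult_le_pos; lra).
      assert (0 <= u1 * (gA * (pe j - pe i))) by (apply Rmult_le_pos; lra). nra.
  - intros L1 L0 Hl1 Hl0 [L [HL [_ HLb]]] x Hx HA0 HB0.
    assert (HM : forall D p, 0 <= D /\ D <= p /\ p <= 1 ->
       2 * (p * L1 + (1 - p) * L0) + Rabs (f1 D (p - D) - f0 D (p - D)) <= L)
      by (intros D0 p Hp; apply (HLb D0 p); auto).
    destruct (Hx GA) as [IA [RA DA]]; destruct (Hx GB) as [IB [RB DB]].
    set (D := fun t => x t GA - x t GB).
    set (D' := fun t => rhs f0 f1 (AA2 (x t)) (x t) GA - rhs f0 f1 (AA2 (x t)) (x t) GB).
    assert (HG : GapH D D' (1 - L)).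
    { split; [lra|]. split; [|split; [|split]].
      - intros t Ht. specialize (IA t Ht). specialize (IB t Ht). unfold D, I01 in *. lra.
      - apply rc_minus; auto.
      - intros t Ht. apply (derivable_pt_lim_minus (fun s => x s GA) (fun s => x s GB)); auto.
      - intros t Ht. unfold D, D'.
        apply (AA2_cases f0 f1 L1 L0 L); auto; [apply IA | apply IB]; lra. }
    assert (Hnn : forall t, 0 <= t -> x t GB <= x t GA).
    { intros t Ht. assert (H := gap_nonneg D D' (1 - L) HG ltac:(unfold D; lra) t Ht).
      unfold D in H; lra. }
    assert (cA : cv_t (fun t => x t GA) (pe j)).
    { apply (Hbas j Hj).
      - split; [exact IA| split; [exact RA|]]. intros t Ht. rewrite <- AA2_rhsA.
        + apply DA; auto.
        + apply IA; lra.
        + apply IB; lra.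
        + apply Hnn; lra.
      - rewrite HA0; auto. }
    assert (cD := gap_cv D D' (1 - L) HG).
    assert (cB : cv_t (fun t => x t GB) (pe j)).
    { replace (pe j) with ((-1) * 0 + 1 * pe j) by ring.
      apply (cv_t_lin _ _ _ _ _ _ _ cD cA). intros t _. unfold D. ring. }
    split; [exact cA| split; [exact cB| split]].
    + replace (u1 * pe j) with ((u1 * gA + (1 - gA) * u0) * pe j + ((1 - gA) * u1 - (1 - gA) * u0) * pe j) by ring.
      apply (cv_t_lin _ _ _ _ _ _ _ cA cB). intros t Ht.
      apply AA2_util; auto.
    + apply Rle_ge.
      assert (0 <= (1 - gA) * (pe j - pe i)) by (apply Rmult_le_pos; lra).
      assert (0 <= u1 * ((1 - gA) * (pe j - pe i))) by (apply Rmult_le_pos; lra). nra.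
Qed.
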